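(* Let $\hat\sigma_1,\hat\sigma_2,\hat\sigma_3$ be the Pauli matrices and, for arbitrary $\alpha_1,\alpha_2,\alpha_3\in\mathbb{R}$, let $$\Omega = e^{-i(\alpha_1\hat\sigma_1\otimes\hat\sigma_1+\alpha_2\hat\sigma_2\otimes\hat\sigma_2+\alpha_3\hat\sigma_3\otimes\hat\sigma_3)}.$$ Let $\rho^{SE}_D$ be any two-qubit density operator whose correlation matrix $t_{ij}=\operatorname{Tr}(\rho^{SE}_D\,\hat\sigma_i\otimes\hat\sigma_j)$ is diagonal, and let $\rho^S=\operatorname{Tr}_E\rho^{SE}_D$. Then there exists a single-qubit density operator $\zeta^E$ such that $$\operatorname{Tr}_E\big(\Omega\rho^{SE}_D\Omega^\dagger\big)=\operatorname{Tr}_E\big(\Omega(\rho^S\otimes\zeta^E)\Omega^\dagger\big),$$ i.e. the system dynamics are $U$-generated by a product state for $U=\Omega$.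
   Context: A two-qubit state is written $\rho^{SE}=\tfrac14\big(\mathbb{I}\otimes\mathbb{I}+\vec a\cdot\vec\sigma\otimes\mathbb{I}+\mathbb{I}\otimes\vec b\cdot\vec\sigma+\sum_{i,j}t_{ij}\hat\sigma_i\otimes\hat\sigma_j\big)$, where $(t_{ij})$ is its correlation matrix. ''$U$-generated by a product state'' means existence of a valid environment state $\zeta^E$ with $\operatorname{Tr}_E(U\rho^{SE}U^\dagger)=\operatorname{Tr}_E(U(\rho^S\otimes\zeta^E)U^\dagger)$. *)

(* Defs.v *)
From HB Require Import structures.
From mathcomp Require Import all_boot all_order all_algebra.
From mathcomp Require Import all_classical all_reals all_analysis.
From mathcomp Require Export complex mxtens.
Set Implicit Arguments. Unset Strict Implicit. Unset Printing Implicit Defensive.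
Import Order.TTheory GRing.Theory Num.Theory.
Local Open Scope ring_scope.
Local Open Scope complex_scope.

Section QDefs.
Variable R : realType.
Local Notation C := R[i].

Definition dagger m n (A : 'M[C]_(m, n)) : 'M[C]_(n, m) := (map_mx Num.conj A)^T.

(* matrix power (without needing a ring structure on 'M_n) *)
Definition mxpow n (A : 'M[C]_n) (k : nat) : 'M[C]_n := iter k (mulmx A) 1%:M.

Definition mexp n (A : 'M[C]_n) : 'M[C]_n :=
  limn (fun N : nat => \sum_(k < N) (k`!%:R : C)^-1 *: mxpow A k).

(* Pauli matrices  sigma_1 = [[0,1],[1,0]], sigma_2 = [[0,-i],[i,0]],
   sigma_3 = [[1,0],[0,-1]]  (rows/columns indexed by 'I_2 = {0,1}) *)
Definition sigma1 : 'M[C]_2 := \matrix_(a, b) (if a == b then 0 else 1).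
Definition sigma2 : 'M[C]_2 :=
  \matrix_(a, b) (if a == b then 0 else if (a : nat) == 0%N then - 'i else 'i).
Definition sigma3 : 'M[C]_2 :=
  \matrix_(a, b) (if a == b then (if (a : nat) == 0%N then 1 else -1) else 0).
Definition pauli (k : 'I_3) : 'M[C]_2 :=
  match val k with 0%N => sigma1 | 1%N => sigma2 | _ => sigma3 end.

(* partial trace over the environment E (second tensor factor of S (x) E,
   with the Kronecker ordering of mxtens: (A *t B) (i,j) (k,l) = A i k * B j l) *)
Definition ptraceE (X : 'M[C]_(2 * 2)) : 'M[C]_2 :=
  \matrix_(a, b) \sum_(k < 2) X (mxtens_index (a, k)) (mxtens_index (b, k)).

Definition is_density n (A : 'M[C]_n) : Prop :=
  [/\ dagger A = A,
      (forall v : 'cV[C]_n, 0 <= (dagger v *m A *m v) ord0 ord0)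
    & \tr A = 1].

Definition corr (rho : 'M[C]_(2 * 2)) (i j : 'I_3) : C :=
  \tr (rho *m (pauli i *t pauli j)).

End QDefs.

(* Main.v *)
Require Import Defs.
From HB Require Import structures.
From mathcomp Require Import all_boot all_order all_algebra.
From mathcomp Require Import all_classical all_reals all_analysis.
From mathcomp Require Import complex mxtens.
From mathcomp Require Import ring lra.
Import numFieldNormedType.Exports.
Import Order.TTheory GRing.Theory Num.Theory.
Local Open Scope ring_scope.
Local Open Scope complex_scope.

Module Aux.
Local Set Implicit Arguments.
Local Unset Strict Implicit.
Local Open Scope classical_set_scope.
Local Open Scope complex_scope.
Section Gen.
Variable R : realType.
Local Notation C := R[i].

Definition mF (f : nat -> nat -> C) : 'M[C]_(2 * 2) := \matrix_(i, j) f i j.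
Definition mF2 (f : nat -> nat -> C) : 'M[C]_2 := \matrix_(i, j) f i j.

Lemma mF_eq f g : (forall i j, (i < 4)%N -> (j < 4)%N -> f i j = g i j) -> mF f = mF g.
Proof. by move=> h; apply/matrixP => i j; rewrite !mxE h. Qed.

Lemma mF2_eq f g : (forall i j, (i < 2)%N -> (j < 2)%N -> f i j = g i j) -> mF2 f = mF2 g.
Proof. by move=> h; apply/matrixP => i j; rewrite !mxE h. Qed.

Lemma mF_inj f g : mF f = mF g -> forall i j, (i < 4)%N -> (j < 4)%N -> f i j = g i j.
Proof.
move=> /matrixP h i j hi hj.
by have := h (Ordinal hi) (Ordinal hj); rewrite !mxE.
Qed.

Lemma mulF f g : mF f *m mF g = mF (fun i j => f i 0%N * g 0%N j + f i 1%N * g 1%N j + f i 2%N * g 2%N j + f i 3%N * g 3%N j).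
Proof. by apply/matrixP => i j; rewrite !mxE !big_ord_recr big_ord0 /= add0r !mxE. Qed.

Lemma addF f g : mF f + mF g = mF (fun i j => f i j + g i j).
Proof. by apply/matrixP => i j; rewrite !mxE. Qed.

Lemma scaleF c f : c *: mF f = mF (fun i j => c * f i j).
Proof. by apply/matrixP => i j; rewrite !mxE. Qed.

Lemma tensF f g : mF2 f *t mF2 g = mF (fun i j => f (i %/ 2)%N (j %/ 2)%N * g (i %% 2)%N (j %% 2)%N).
Proof. by apply/matrixP => i j; rewrite !mxE. Qed.

Lemma daggerF f : dagger (mF f) = mF (fun i j => conjc (f j i)).
Proof. by apply/matrixP => i j; rewrite !mxE. Qed.

Lemma dagger2F f : dagger (mF2 f) = mF2 (fun i j => conjc (f j i)).
Proof. by apply/matrixP => i j; rewrite !mxE. Qed.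

Lemma ptrF f : ptraceE (mF f) = mF2 (fun a b => f (a * 2)%N (b * 2)%N + f (a * 2 + 1)%N (b * 2 + 1)%N).
Proof. apply/matrixP => i j; rewrite !mxE !big_ord_recr big_ord0 /= add0r !mxE /=. by rewrite !addn0. Qed.

Lemma trF f : \tr (mF f) = f 0%N 0%N + f 1%N 1%N + f 2%N 2%N + f 3%N 3%N.
Proof. by rewrite /mxtrace !big_ord_recr big_ord0 /= add0r !mxE. Qed.

Lemma tr2F f : \tr (mF2 f) = f 0%N 0%N + f 1%N 1%N.
Proof. by rewrite /mxtrace !big_ord_recr big_ord0 /= add0r !mxE. Qed.

Lemma oneF : (1%:M : 'M[C]_(2 * 2)) = mF (fun i j => (i == j)%:R).
Proof. by apply/matrixP => i j; rewrite !mxE. Qed.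

Lemma sig1F : sigma1 R = mF2 (fun a b => if a == b then 0 else 1).
Proof. by apply/matrixP => i j; rewrite !mxE. Qed.
Lemma sig2F : sigma2 R = mF2 (fun a b => if a == b then 0 else if a == 0%N then - 'i else 'i).
Proof. by apply/matrixP => i j; rewrite !mxE. Qed.
Lemma sig3F : sigma3 R = mF2 (fun a b => if a == b then (if a == 0%N then 1 else -1) else 0).
Proof. by apply/matrixP => i j; rewrite !mxE. Qed.

Lemma eq_cert (L Rr E : R) : L - Rr = E -> E = 0 -> L = Rr.
Proof. by move=> h1 h2; apply/eqP; rewrite -subr_eq0 h1 h2. Qed.
End Gen.

Ltac cplx := apply/eqP; rewrite eq_complex /=; apply/andP; split; apply/eqP.
Section Core.
Variable R : realType.
Local Notation C := R[i].
Variables (x00 x11 x22 x01 y01 x02 y02 x03 x12 Cp Sp cq sq cr sr z1 z2 z3 : R).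

Definition x33 := 1 - x00 - x11 - x22.
Definition rhoS (i j : nat) : C :=
  match i, j with
  | 0%N, 0%N => x00%:C | 1%N, 1%N => x11%:C | 2%N, 2%N => x22%:C | 3%N, 3%N => x33%:C
  | 0%N, 1%N => x01 +i* y01 | 2%N, 3%N => x01 +i* y01
  | 1%N, 0%N => x01 +i* (- y01) | 3%N, 2%N => x01 +i* (- y01)
  | 0%N, 2%N => x02 +i* y02 | 1%N, 3%N => x02 +i* y02
  | 2%N, 0%N => x02 +i* (- y02) | 3%N, 1%N => x02 +i* (- y02)
  | 0%N, 3%N => x03%:C | 3%N, 0%N => x03%:C
  | 1%N, 2%N => x12%:C | 2%N, 1%N => x12%:C
  | _, _ => 0
  end.
Definition omG (i j : nat) : C :=
  match i, j with
  | 0%N, 0%N => (Cp * cq) +i* (- (Sp * cq)) | 3%N, 3%N => (Cp * cq) +i* (- (Sp * cq))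
  | 0%N, 3%N => (- (Sp * sq)) +i* (- (Cp * sq)) | 3%N, 0%N => (- (Sp * sq)) +i* (- (Cp * sq))
  | 1%N, 1%N => (Cp * cr) +i* (Sp * cr) | 2%N, 2%N => (Cp * cr) +i* (Sp * cr)
  | 1%N, 2%N => (Sp * sr) +i* (- (Cp * sr)) | 2%N, 1%N => (Sp * sr) +i* (- (Cp * sr))
  | _, _ => 0
  end.
Definition zetaF (i j : nat) : C :=
  match i, j with
  | 0%N, 0%N => (2^-1 * (1 + z3))%:C
  | 0%N, 1%N => (2^-1 * z1) +i* (- (2^-1 * z2))
  | 1%N, 0%N => (2^-1 * z1) +i* (2^-1 * z2)
  | 1%N, 1%N => (2^-1 * (1 - z3))%:C
  | _, _ => 0
  end.
Definition s1 := sq * cr + cq * sr.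
Definition c1 := cq * cr - sq * sr.
Definition s2 := sr * cq - cr * sq.
Definition c2 := cr * cq + sr * sq.
Definition s3 := 2 * Sp * Cp.
Definition c3 := Cp ^+ 2 - Sp ^+ 2.
Definition aa1 := 4 * x02.
Definition aa2 := - (4 * y02).
Definition aa3 := x00 + x11 - x22 - x33.
Definition bb1 := 4 * x01.
Definition bb2 := - (4 * y01).
Definition bb3 := x00 - x11 + x22 - x33.
Definition FF1 := s2 * s3 * (bb1 - z1) + s3 * c2 * aa2 * z3 - s2 * c3 * aa3 * z2.
Definition FF2 := s3 * s1 * (bb2 - z2) + s1 * c3 * aa3 * z1 - s3 * c1 * aa1 * z3.
Definition FF3 := s1 * s2 * (bb3 - z3) + s2 * c1 * aa1 * z2 - s1 * c2 * aa2 * z1.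

Hypothesis hK1 : Cp ^+ 2 + Sp ^+ 2 - 1 = 0.
Hypothesis hK2 : cq ^+ 2 + sq ^+ 2 - 1 = 0.
Hypothesis hK3 : cr ^+ 2 + sr ^+ 2 - 1 = 0.
Hypothesis hF1 : FF1 = 0.
Hypothesis hF2 : FF2 = 0.
Hypothesis hF3 : FF3 = 0.

Lemma core : ptraceE (mF omG *m mF rhoS *m dagger (mF omG))
  = ptraceE (mF omG *m (ptraceE (mF rhoS) *t mF2 zetaF) *m dagger (mF omG)).
Proof.
rewrite daggerF !ptrF tensF !mulF !ptrF; apply: mF2_eq => i j hi hj.
case: i hi => [|[|i]] // _; case: j hj => [|[|j]] // _;
rewrite /omG /rhoS /zetaF /x33 /=; cplx.
  apply: (@eq_cert _ _ _ (2^-1 * FF3 + (- (2%:R * cq * sq * x02 * z2) + (2%:R * cq * sq * y02 * z1) + (1 / 2%:R * cq ^+ 2 * x00) - (1 / 2%:R * cq ^+ 2 * x00 * z3) - (1 / 2%:R * cq ^+ 2 * x11) - (1 / 2%:R * cq ^+ 2 * x11 * z3) + (2%:R * cr * sr * x02 * z2) + (2%:R * cr * sr * y02 * z1) - (1 / 2%:R * cr ^+ 2 * x00) + (1 / 2%:R * cr ^+ 2 * x00 * z3) + (1 / 2%:R * cr ^+ 2 * x11) + (1 / 2%:R * cr ^+ 2 * x11 * z3) + (1 / 2%:R * sq ^+ 2) - (1 / 2%:R * sq ^+ 2 * x00) - (1 / 2%:R * sq ^+ 2 * x00 * z3) - (1 / 2%:R * sq ^+ 2 * x11) - (1 / 2%:R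 * sq ^+ 2 * x11 * z3) - (sq ^+ 2 * x22) + (1 / 2%:R * sq ^+ 2 * z3) - (1 / 2%:R * sr ^+ 2) + (1 / 2%:R * sr ^+ 2 * x00) + (1 / 2%:R * sr ^+ 2 * x00 * z3) + (1 / 2%:R * sr ^+ 2 * x11) + (1 / 2%:R * sr ^+ 2 * x11 * z3) + (sr ^+ 2 * x22) - (1 / 2%:R * sr ^+ 2 * z3)) * (Cp ^+ 2 + Sp ^+ 2 - 1) + ((1%:R / 2%:R) - (2%:R * cr * sr * x02 * z2) - (2%:R * cr * sr * y02 * z1) - (1 / 2%:R * cr ^+ 2) + (cr ^+ 2 * x00) + (cr ^+ 2 * x22) - (1 / 2%:R * cr ^+ 2 * z3) - (1 / 2%:R * x00) - (1 / 2%:R * x00 * z3) - (1 / 2%:R * x11) - (1 / 2%:R * x11 * z3) - (x22) + (1 / 2%:R * z3)) * (cq ^+ 2 + sq ^+ 2 - 1) + (- (1%:R / 2%:R) + (2%:R * cq * sq * x02 * z2) - (2%:R * cq * sq * y02 * z1) + (1 / 2%:R * cq ^+ 2) - (cq ^+ 2 * x00) - (cq ^+ 2 * x22) + (1 / 2%:R * cq ^+ 2 * z3) + (1 / 2%:R * x00) + (1 / 2%:R * x00 * z3) + (1 / 2%:R * x11) + (1 / 2%:R * x11 * z3) + (x22) - (1 / 2%:R * z3)) * (cr ^+ 2 + sr ^+ 2 - 1))).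
    rewrite /FF1 /FF2 /FF3 /s1 /c1 /s2 /c2 /s3 /c3 /aa1 /aa2 /aa3 /bb1 /bb2 /bb3 /x33; by field.
  rewrite ?hF1 ?hF2 ?hF3 ?hK1 ?hK2 ?hK3; ring.
  apply: (@eq_cert _ _ _ (0)).
    rewrite /FF1 /FF2 /FF3 /s1 /c1 /s2 /c2 /s3 /c3 /aa1 /aa2 /aa3 /bb1 /bb2 /bb3 /x33; by field.
  rewrite ?hF1 ?hF2 ?hF3 ?hK1 ?hK2 ?hK3; ring.
  apply: (@eq_cert _ _ _ (2^-1 * FF1)).
    rewrite /FF1 /FF2 /FF3 /s1 /c1 /s2 /c2 /s3 /c3 /aa1 /aa2 /aa3 /bb1 /bb2 /bb3 /x33; by field.
  rewrite ?hF1 ?hF2 ?hF3 ?hK1 ?hK2 ?hK3; ring.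
  apply: (@eq_cert _ _ _ (- (2^-1 * FF2))).
    rewrite /FF1 /FF2 /FF3 /s1 /c1 /s2 /c2 /s3 /c3 /aa1 /aa2 /aa3 /bb1 /bb2 /bb3 /x33; by field.
  rewrite ?hF1 ?hF2 ?hF3 ?hK1 ?hK2 ?hK3; ring.
  apply: (@eq_cert _ _ _ (2^-1 * FF1)).
    rewrite /FF1 /FF2 /FF3 /s1 /c1 /s2 /c2 /s3 /c3 /aa1 /aa2 /aa3 /bb1 /bb2 /bb3 /x33; by field.
  rewrite ?hF1 ?hF2 ?hF3 ?hK1 ?hK2 ?hK3; ring.
  apply: (@eq_cert _ _ _ (2^-1 * FF2)).
    rewrite /FF1 /FF2 /FF3 /s1 /c1 /s2 /c2 /s3 /c3 /aa1 /aa2 /aa3 /bb1 /bb2 /bb3 /x33; by field.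
  rewrite ?hF1 ?hF2 ?hF3 ?hK1 ?hK2 ?hK3; ring.
  apply: (@eq_cert _ _ _ (- (2^-1 * FF3) + ((2%:R * cq * sq * x02 * z2) - (2%:R * cq * sq * y02 * z1) + (1 / 2%:R * cq ^+ 2) - (1 / 2%:R * cq ^+ 2 * x00) - (1 / 2%:R * cq ^+ 2 * x00 * z3) - (1 / 2%:R * cq ^+ 2 * x11) - (1 / 2%:R * cq ^+ 2 * x11 * z3) - (cq ^+ 2 * x22) + (1 / 2%:R * cq ^+ 2 * z3) - (2%:R * cr * sr * x02 * z2) - (2%:R * cr * sr * y02 * z1) - (1 / 2%:R * cr ^+ 2) + (1 / 2%:R * cr ^+ 2 * x00) + (1 / 2%:R * cr ^+ 2 * x00 * z3) + (1 / 2%:R * cr ^+ 2 * x11) + (1 / 2%:R * cr ^+ 2 * x11 * z3) + (cr ^+ 2 * x22) - (1 / 2%:R * cr ^+ 2 * z3) + (1 / 2%:R * sq ^+ 2 * x00) - (1 / 2%:R * sq ^+ 2 * x00 * z3) - (1 / 2%:R * sq ^+ 2 * x11) - (1 / 2%:R * sq ^+ 2 * x11 * z3) - (1 / 2%:R * sr ^+ 2 * x00) + (1 / 2%:R * sr ^+ 2 * x00 * z3) + (1 / 2%:R * sr ^+ 2 * x11) + (1 / 2%:R * sr ^+ 2 * x11 * z3)) * (Cp ^+ 2 + Sp ^+ 2 - 1) + (- (2%:R * cq * sq * x02 * z2) + (2%:R * cq * sq * y02 * z1) - (1 / 2%:R * cq ^+ 2) + (cq ^+ 2 * x00) + (cq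 ^+ 2 * x22) - (1 / 2%:R * cq ^+ 2 * z3) - (1 / 2%:R * x00) + (1 / 2%:R * x00 * z3) + (1 / 2%:R * x11) + (1 / 2%:R * x11 * z3)) * (cr ^+ 2 + sr ^+ 2 - 1) + ((2%:R * cr * sr * x02 * z2) + (2%:R * cr * sr * y02 * z1) + (1 / 2%:R * cr ^+ 2) - (cr ^+ 2 * x00) - (cr ^+ 2 * x22) + (1 / 2%:R * cr ^+ 2 * z3) + (1 / 2%:R * x00) - (1 / 2%:R * x00 * z3) - (1 / 2%:R * x11) - (1 / 2%:R * x11 * z3)) * (cq ^+ 2 + sq ^+ 2 - 1))).
    rewrite /FF1 /FF2 /FF3 /s1 /c1 /s2 /c2 /s3 /c3 /aa1 /aa2 /aa3 /bb1 /bb2 /bb3 /x33; by field.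
  rewrite ?hF1 ?hF2 ?hF3 ?hK1 ?hK2 ?hK3; ring.
  apply: (@eq_cert _ _ _ (0)).
    rewrite /FF1 /FF2 /FF3 /s1 /c1 /s2 /c2 /s3 /c3 /aa1 /aa2 /aa3 /bb1 /bb2 /bb3 /x33; by field.
  rewrite ?hF1 ?hF2 ?hF3 ?hK1 ?hK2 ?hK3; ring.
Qed.
End Core.
Section St.
Variable R : realType.
Local Notation C := R[i].

Lemma rhoE (rho : 'M[C]_(2 * 2)) :
  rho = mF (fun i j => complex.Re (rho (inord i) (inord j)) +i* complex.Im (rho (inord i) (inord j))).
Proof. by apply/matrixP => i j; rewrite !mxE !inord_val; case: (rho i j). Qed.

Lemma rho_struct (rho : 'M[C]_(2 * 2)) :
  dagger rho = rho -> (forall i j : 'I_3, i != j -> corr rho i j = 0) -> \tr rho = 1 ->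
  let X i j := complex.Re (rho (inord i) (inord j)) in
  let Y i j := complex.Im (rho (inord i) (inord j)) in
  rho = mF (rhoS (X 0 0)%N (X 1 1)%N (X 2 2)%N (X 0 1)%N (Y 0 1)%N (X 0 2)%N (Y 0 2)%N (X 0 3)%N (X 1 2)%N).
Proof.
move=> hH hC hT X Y.
have rE : rho = mF (fun i j => X i j +i* Y i j) by exact: rhoE.
rewrite rE daggerF in hH.
have hH' := mF_inj hH.
have hh i j : (i < 4)%N -> (j < 4)%N -> X j i = X i j /\ - Y j i = Y i j.
  by move=> hi hj; have := hH' i j hi hj; case.
have c01 := hC (@Ordinal 3 0 isT) (@Ordinal 3 1 isT) isT.
have c10 := hC (@Ordinal 3 1 isT) (@Ordinal 3 0 isT) isT.
have c02 := hC (@Ordinal 3 0 isT) (@Ordinal 3 2 isT) isT.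
have c20 := hC (@Ordinal 3 2 isT) (@Ordinal 3 0 isT) isT.
have c12 := hC (@Ordinal 3 1 isT) (@Ordinal 3 2 isT) isT.
have c21 := hC (@Ordinal 3 2 isT) (@Ordinal 3 1 isT) isT.
move: c01 c10 c02 c20 c12 c21 hT.
rewrite /corr /pauli /= sig1F sig2F sig3F !tensF rE !mulF !trF /= => c01 c10 c02 c20 c12 c21 hT.
move/eqP: c01; rewrite eq_complex /= => /andP[/eqP c01r /eqP c01i].
move/eqP: c10; rewrite eq_complex /= => /andP[/eqP c10r /eqP c10i].
move/eqP: c02; rewrite eq_complex /= => /andP[/eqP c02r /eqP c02i].
move/eqP: c20; rewrite eq_complex /= => /andP[/eqP c20r /eqP c20i].
move/eqP: c12; rewrite eq_complex /= => /andP[/eqP c12r /eqP c12i].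
move/eqP: c21; rewrite eq_complex /= => /andP[/eqP c21r /eqP c21i].
move/eqP: hT; rewrite eq_complex /= => /andP[/eqP hTr _].
have c01r' : - Y 0%N 3%N + Y 1%N 2%N - Y 2%N 1%N + Y 3%N 0%N = 0 by rewrite -c01r; ring.
have c01i' : X 0%N 3%N - X 1%N 2%N + X 2%N 1%N - X 3%N 0%N = 0 by rewrite -c01i; ring.
have c10r' : - Y 0%N 3%N - Y 1%N 2%N + Y 2%N 1%N + Y 3%N 0%N = 0 by rewrite -c10r; ring.
have c10i' : X 0%N 3%N + X 1%N 2%N - X 2%N 1%N - X 3%N 0%N = 0 by rewrite -c10i; ring.
have c02r' : X 0%N 2%N - X 1%N 3%N + X 2%N 0%N - X 3%N 1%N = 0 by rewrite -c02r; ring.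
have c02i' : Y 0%N 2%N - Y 1%N 3%N + Y 2%N 0%N - Y 3%N 1%N = 0 by rewrite -c02i; ring.
have c20r' : X 0%N 1%N + X 1%N 0%N - X 2%N 3%N - X 3%N 2%N = 0 by rewrite -c20r; ring.
have c20i' : Y 0%N 1%N + Y 1%N 0%N - Y 2%N 3%N - Y 3%N 2%N = 0 by rewrite -c20i; ring.
have c12r' : - Y 0%N 2%N + Y 1%N 3%N + Y 2%N 0%N - Y 3%N 1%N = 0 by rewrite -c12r; ring.
have c12i' : X 0%N 2%N - X 1%N 3%N - X 2%N 0%N + X 3%N 1%N = 0 by rewrite -c12i; ring.
have c21r' : - Y 0%N 1%N + Y 1%N 0%N + Y 2%N 3%N - Y 3%N 2%N = 0 by rewrite -c21r; ring.
have c21i' : X 0%N 1%N - X 1%N 0%N - X 2%N 3%N + X 3%N 2%N = 0 by rewrite -c21i; ring.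
have hTr' : X 0%N 0%N + X 1%N 1%N + X 2%N 2%N + X 3%N 3%N = 1 by rewrite -hTr; ring.
clear c01r c01i c10r c10i c02r c02i c20r c20i c12r c12i c21r c21i hTr.
have [e00 f00] := hh 0%N 0%N isT isT.
have [e01 f01] := hh 0%N 1%N isT isT.
have [e02 f02] := hh 0%N 2%N isT isT.
have [e03 f03] := hh 0%N 3%N isT isT.
have [e11 f11] := hh 1%N 1%N isT isT.
have [e12 f12] := hh 1%N 2%N isT isT.
have [e13 f13] := hh 1%N 3%N isT isT.
have [e22 f22] := hh 2%N 2%N isT isT.
have [e23 f23] := hh 2%N 3%N isT isT.
have [e33 f33] := hh 3%N 3%N isT isT.
clear hH hH' hh rE hC.
apply: mF_eq => i j hi hj.
case: i hi => [|[|[|[|i]]]] // _; case: j hj => [|[|[|[|j]]]] // _;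
rewrite /rhoS /x33 /=; cplx.
all: lra.
Qed.
End St.
Section Ps.
Variable R : realType.
Local Notation C := R[i].

Definition vF (n : nat) (g : nat -> C) : 'cV[C]_n := \matrix_(i < n, j < 1) g i.

Arguments vF : clear implicits.
Lemma cVE n (v : 'cV[C]_n.+1) : v = vF n.+1 (fun i => v (inord i) ord0).
Proof. by apply/matrixP => i j; rewrite !mxE inord_val ord1. Qed.

Lemma quad2F (g : nat -> C) f : (dagger (vF 2 g) *m mF2 f *m vF 2 g) ord0 ord0
  = (conjc (g 0%N) * f 0%N 0%N + conjc (g 1%N) * f 1%N 0%N) * g 0%N
  + (conjc (g 0%N) * f 0%N 1%N + conjc (g 1%N) * f 1%N 1%N) * g 1%N.
Proof. rewrite !mxE !big_ord_recr big_ord0 /= !add0r !mxE !big_ord_recr big_ord0 /= !add0r !mxE /=. rewrite ?big_ord0 ?add0r. done. Qed.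

Lemma zeta_density (z1 z2 z3 : R) : z1 ^+ 2 + z2 ^+ 2 + z3 ^+ 2 <= 1 ->
  is_density (mF2 (zetaF z1 z2 z3)).
Proof.
move=> hz; split.
- rewrite dagger2F; apply: mF2_eq => i j hi hj.
  case: i hi => [|[|i]] // _; case: j hj => [|[|j]] // _; rewrite /zetaF /=; cplx; ring.
- move=> v; rewrite [v]cVE quad2F.
  move: (v (inord 0) ord0) (v (inord 1) ord0) => [p1 q1] [p2 q2].
  rewrite /zetaF /= lecE /=; apply/andP; split; first by apply/eqP; ring.
  set A := p1 ^+ 2 + q1 ^+ 2 + p2 ^+ 2 + q2 ^+ 2.
  set u1 := 2 * (p1 * p2 + q1 * q2).
  set u2 := 2 * (p1 * q2 - q1 * p2).
  set u3 := p1 ^+ 2 + q1 ^+ 2 - (p2 ^+ 2 + q2 ^+ 2).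
  set w := z1 * u1 + z2 * u2 + z3 * u3.
  have hu : u1 ^+ 2 + u2 ^+ 2 + u3 ^+ 2 = A ^+ 2 by rewrite /u1 /u2 /u3 /A; ring.
  have hA : 0 <= A by rewrite /A !addr_ge0 // sqr_ge0.
  have CS : w ^+ 2 <= (z1 ^+ 2 + z2 ^+ 2 + z3 ^+ 2) * (u1 ^+ 2 + u2 ^+ 2 + u3 ^+ 2).
    rewrite -subr_ge0.
    have -> : (z1 ^+ 2 + z2 ^+ 2 + z3 ^+ 2) * (u1 ^+ 2 + u2 ^+ 2 + u3 ^+ 2) - w ^+ 2
      = (z1 * u2 - z2 * u1) ^+ 2 + (z1 * u3 - z3 * u1) ^+ 2 + (z2 * u3 - z3 * u2) ^+ 2 by rewrite /w; ring.
    by rewrite !addr_ge0 // sqr_ge0.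
  have hw : w ^+ 2 <= A ^+ 2.
    apply: (le_trans CS); rewrite hu -[X in _ <= X]mul1r; apply: ler_wpM2r => //; exact: sqr_ge0.
  have key : 0 <= A + w by nra.
  have -> : (p1 * (2^-1 * (1 + z3)) - - q1 * 0 + (p2 * (2^-1 * z1) - - q2 * (2^-1 * z2))) * p1 -
    (p1 * 0 + - q1 * (2^-1 * (1 + z3)) + (p2 * (2^-1 * z2) + - q2 * (2^-1 * z1))) * q1 +
    ((p1 * (2^-1 * z1) - - q1 * - (2^-1 * z2) + (p2 * (2^-1 * (1 - z3)) - - q2 * 0)) * p2 -
     (p1 * - (2^-1 * z2) + - q1 * (2^-1 * z1) + (p2 * 0 + - q2 * (2^-1 * (1 - z3)))) * q2)
    = 2^-1 * (A + w) by rewrite /A /w /u1 /u2 /u3; field.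
  by rewrite mulr_ge0 // invr_ge0 ler0n.
- rewrite tr2F /zetaF /=; cplx; by field.
Qed.
End Ps.
Arguments vF {R} n g.
Section Bl.
Variable R : realType.
Local Notation C := R[i].

Lemma quad4F (g : nat -> C) f : (dagger (vF 4 g) *m mF f *m vF 4 g) ord0 ord0
  = (conjc (g 0%N) * f 0%N 0%N + conjc (g 1%N) * f 1%N 0%N + conjc (g 2%N) * f 2%N 0%N + conjc (g 3%N) * f 3%N 0%N) * g 0%N
  + (conjc (g 0%N) * f 0%N 1%N + conjc (g 1%N) * f 1%N 1%N + conjc (g 2%N) * f 2%N 1%N + conjc (g 3%N) * f 3%N 1%N) * g 1%N
  + (conjc (g 0%N) * f 0%N 2%N + conjc (g 1%N) * f 1%N 2%N + conjc (g 2%N) * f 2%N 2%N + conjc (g 3%N) * f 3%N 2%N) * g 2%N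
  + (conjc (g 0%N) * f 0%N 3%N + conjc (g 1%N) * f 1%N 3%N + conjc (g 2%N) * f 2%N 3%N + conjc (g 3%N) * f 3%N 3%N) * g 3%N.
Proof. rewrite !mxE !big_ord_recr big_ord0 /= !add0r !mxE !big_ord_recr big_ord0 /= !add0r !mxE /=. rewrite ?big_ord0 ?add0r. done. Qed.

Definition gA (a b : C) (i : nat) : C := match i with 0%N => a | 1%N => b | _ => 0 end.
Definition gB (a b : C) (i : nat) : C := match i with 2%N => a | 3%N => b | _ => 0 end.

Lemma bloch_le1 (x00 x11 x22 x01 y01 x02 y02 x03 x12 : R) :
  (forall v : 'cV[C]_(2 * 2), 0 <= (dagger v *m mF (rhoS x00 x11 x22 x01 y01 x02 y02 x03 x12) *m v) ord0 ord0) ->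
  bb1 x01 ^+ 2 + bb2 y01 ^+ 2 + bb3 x00 x11 x22 ^+ 2 <= 1.
Proof.
move=> hP.
pose p := x00 + x22. pose r := x11 + x33 x00 x11 x22.
pose qr := 2 * x01. pose qi := 2 * y01.
have h1 := hP (vF 4 (gA ((- qr) +i* (- qi)) p%:C)).
have h2 := hP (vF 4 (gB ((- qr) +i* (- qi)) p%:C)).
have h3 := hP (vF 4 (gA r%:C ((- qr) +i* qi))).
have h4 := hP (vF 4 (gB r%:C ((- qr) +i* qi))).
move: h1 h2 h3 h4; rewrite !quad4F /gA /gB /rhoS /= !lecE /=.
move=> /andP[_ h1] /andP[_ h2] /andP[_ h3] /andP[_ h4].
move: h1 h2 h3 h4; rewrite /p /r /qr /qi /bb1 /bb2 /bb3 /x33 => h1 h2 h3 h4.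
nra.
Qed.
End Bl.
Section Z.
Variable R : realType.
Lemma zsol (s1 c1 s2 c2 s3 c3 a1 a2 a3 b1 b2 b3 : R) : exists z1 z2 z3 : R,
 [/\ s2 * s3 * (b1 - z1) + s3 * c2 * a2 * z3 - s2 * c3 * a3 * z2 = 0,
     s3 * s1 * (b2 - z2) + s1 * c3 * a3 * z1 - s3 * c1 * a1 * z3 = 0,
     s1 * s2 * (b3 - z3) + s2 * c1 * a1 * z2 - s1 * c2 * a2 * z1 = 0 &
     z1 ^+ 2 + z2 ^+ 2 + z3 ^+ 2 <= b1 ^+ 2 + b2 ^+ 2 + b3 ^+ 2].
Proof.
have [->|h1] := eqVneq s1 0.
  exists b1, 0, 0; split; [ring|ring|ring|].
  have := sqr_ge0 b2; have := sqr_ge0 b3; have := sqr_ge0 b1; rewrite expr0n /=; lra.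
have [->|h2] := eqVneq s2 0.
  exists 0, b2, 0; split; [ring|ring|ring|].
  have := sqr_ge0 b2; have := sqr_ge0 b3; have := sqr_ge0 b1; rewrite expr0n /=; lra.
have [->|h3] := eqVneq s3 0.
  exists 0, 0, b3; split; [ring|ring|ring|].
  have := sqr_ge0 b2; have := sqr_ge0 b3; have := sqr_ge0 b1; rewrite expr0n /=; lra.
pose d := a1^+2*c1^+2*s2^+2*s3^+2 + a2^+2*c2^+2*s1^+2*s3^+2 + a3^+2*c3^+2*s1^+2*s2^+2 + s1^+2*s2^+2*s3^+2.
have hP : 0 < (s1 * s2 * s3) ^+ 2.
  by rewrite exprn_even_gt0 //= !mulf_neq0.
have hd : d != 0.
  apply/lt0r_neq0.
  have : 0 <= a1^+2*c1^+2*s2^+2*s3^+2 + a2^+2*c2^+2*s1^+2*s3^+2 + a3^+2*c3^+2*s1^+2*s2^+2.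
    rewrite -!exprMn; apply: addr_ge0; [apply: addr_ge0|]; exact: sqr_ge0.
  rewrite /d; move: hP; rewrite !exprMn; lra.
pose z1 := (a1*a2*b2*c1*c2*s1*s2*s3^+2 + a1*a3*b3*c1*c3*s1*s2^+2*s3 + a1^+2*b1*c1^+2*s2^+2*s3^+2 + a2*b3*c2*s1^+2*s2*s3^+2 - a3*b2*c3*s1^+2*s2^+2*s3 + b1*s1^+2*s2^+2*s3^+2) / d.
pose z2 := (a1*a2*b1*c1*c2*s1*s2*s3^+2 - a1*b3*c1*s1*s2^+2*s3^+2 + a2*a3*b3*c2*c3*s1^+2*s2*s3 + a2^+2*b2*c2^+2*s1^+2*s3^+2 + a3*b1*c3*s1^+2*s2^+2*s3 + b2*s1^+2*s2^+2*s3^+2) / d.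
pose z3 := (a1*a3*b1*c1*c3*s1*s2^+2*s3 + a1*b2*c1*s1*s2^+2*s3^+2 + a2*a3*b2*c2*c3*s1^+2*s2*s3 - a2*b1*c2*s1^+2*s2*s3^+2 + a3^+2*b3*c3^+2*s1^+2*s2^+2 + b3*s1^+2*s2^+2*s3^+2) / d.
have F1 : s2 * s3 * (b1 - z1) + s3 * c2 * a2 * z3 - s2 * c3 * a3 * z2 = 0.
  rewrite /z1 /z2 /z3 /d; field; rewrite !exprMn; exact: hd.
have F2 : s3 * s1 * (b2 - z2) + s1 * c3 * a3 * z1 - s3 * c1 * a1 * z3 = 0.
  rewrite /z1 /z2 /z3 /d; field; rewrite !exprMn; exact: hd.
have F3 : s1 * s2 * (b3 - z3) + s2 * c1 * a1 * z2 - s1 * c2 * a2 * z1 = 0.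
  rewrite /z1 /z2 /z3 /d; field; rewrite !exprMn; exact: hd.
exists z1, z2, z3; split => //.
have E : (s1 * s2 * s3) * (b1 * z1 + b2 * z2 + b3 * z3 - (z1 ^+ 2 + z2 ^+ 2 + z3 ^+ 2))
   = s1 * z1 * (s2 * s3 * (b1 - z1) + s3 * c2 * a2 * z3 - s2 * c3 * a3 * z2)
   + s2 * z2 * (s3 * s1 * (b2 - z2) + s1 * c3 * a3 * z1 - s3 * c1 * a1 * z3)
   + s3 * z3 * (s1 * s2 * (b3 - z3) + s2 * c1 * a1 * z2 - s1 * c2 * a2 * z1) by ring.
rewrite F1 F2 F3 !mulr0 !addr0 in E.
have hP0 : s1 * s2 * s3 != 0 by rewrite !mulf_neq0.
have bz : b1 * z1 + b2 * z2 + b3 * z3 = z1 ^+ 2 + z2 ^+ 2 + z3 ^+ 2.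
  by apply/eqP; rewrite -subr_eq0; move/eqP: E; rewrite mulf_eq0 (negbTE hP0).
move: (z1) (z2) (z3) bz => u1 u2 u3 bz.
have CS : (b1 * u1 + b2 * u2 + b3 * u3) ^+ 2 <= (b1 ^+ 2 + b2 ^+ 2 + b3 ^+ 2) * (u1 ^+ 2 + u2 ^+ 2 + u3 ^+ 2).
  rewrite -subr_ge0.
  have -> : (b1 ^+ 2 + b2 ^+ 2 + b3 ^+ 2) * (u1 ^+ 2 + u2 ^+ 2 + u3 ^+ 2) - (b1 * u1 + b2 * u2 + b3 * u3) ^+ 2
     = (b1 * u2 - b2 * u1) ^+ 2 + (b1 * u3 - b3 * u1) ^+ 2 + (b2 * u3 - b3 * u2) ^+ 2 by ring.
  by rewrite !addr_ge0 // sqr_ge0.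
rewrite bz in CS.
have z0 : 0 <= u1 ^+ 2 + u2 ^+ 2 + u3 ^+ 2 by rewrite !addr_ge0 // sqr_ge0.
move: CS z0; set zz := u1 ^+ 2 + u2 ^+ 2 + u3 ^+ 2; set bb := b1 ^+ 2 + b2 ^+ 2 + b3 ^+ 2.
move=> CS z0.
have hb : 0 <= bb by rewrite /bb !addr_ge0 // sqr_ge0.
have [zz0|zn] := eqVneq zz 0; first by rewrite zz0.
have zp : 0 < zz by rewrite lt_def zn z0.
by rewrite -(ler_pM2r zp) -expr2.
Qed.
End Z.
Section Exp.
Variable R : realType.
Local Notation C := R[i].
HB.instance Definition _ := NormedModule.copy C C^o.

Lemma normC_real (r : R) : `|r%:C| = `|r|%:C.
Proof. by rewrite normc_def /= expr0n addr0 sqrtr_sqr. Qed.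

Lemma cvgC (u : nat -> R) (l : R) : u @ \oo --> l ->
  (fun n => (u n)%:C : C) @ \oo --> (l%:C : C).
Proof.
move=> /cvgrPdist_lt H; apply/cvgrPdist_lt => e.
case: e => a b; rewrite ltcE /= => /andP[/eqP -> a0].
near=> n. rewrite -rmorphB normC_real ltcR.
near: n. exact: H.
Unshelve. all: by end_near. Qed.

Definition cf (k : nat) : R := (~~ odd k)%:R * (-1) ^+ k./2.
Definition sf (k : nat) : R := (odd k)%:R * (-1) ^+ k.-1./2.

Lemma cfS k : cf k.+1 = - sf k.
Proof.
rewrite /cf /sf /=; case ok: (odd k) => /=; last by rewrite !mul0r oppr0.
rewrite uphalf_half ok /= exprS !mul1r mulN1r; congr (- (_ ^+ _)).
by case: k ok => //= k; rewrite uphalf_half => /negbTE ->.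
Qed.

Lemma sfS k : sf k.+1 = cf k.
Proof. by rewrite /cf /sf /=. Qed.

Lemma powi k : (- 'i : C) ^+ k = (cf k)%:C - 'i * (sf k)%:C.
Proof.
elim: k => [|k ih]; first by rewrite expr0 /cf /sf /= !mul1r mul0r; simpc.
rewrite exprS ih cfS sfS rmorphN /=.
have ii : ('i : C) * 'i = -1 by rewrite -expr2 sqr_i.
rewrite mulrBr !mulrA !mulNr ii; ring.
Qed.

Lemma termE (h : R) k : (k`!%:R : C)^-1 * (- 'i * h%:C) ^+ k
  = (cos_coeff h k)%:C - 'i * (sin_coeff h k)%:C.
Proof.
rewrite exprMn powi /cos_coeff /sin_coeff /= -/(cf k) -/(sf k).
rewrite !rmorphM /= fmorphV /= !rmorphXn /= !rmorph_nat.
ring.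
Qed.

Lemma sumE (h : R) N : \sum_(k < N) (k`!%:R : C)^-1 * (- 'i * h%:C) ^+ k
  = (series (cos_coeff h) N)%:C - 'i * (series (sin_coeff h) N)%:C.
Proof.
under eq_bigr do rewrite termE.
rewrite sumrB -mulr_sumr /series /= !big_mkord !rmorph_sum.
done.
Qed.

Lemma expi_cvg (h : R) :
  (fun N => \sum_(k < N) (k`!%:R : C)^-1 * (- 'i * h%:C) ^+ k) @ \oo
  --> ((cos h)%:C - 'i * (sin h)%:C : C).
Proof.
under eq_fun do rewrite sumE.
have h1 : (fun N => (series (cos_coeff h) N)%:C : C) @ \oo --> ((cos h)%:C : C).
  by apply: cvgC; rewrite cos.unlock; exact: is_cvg_series_cos_coeff.
have h2 : (fun N => (series (sin_coeff h) N)%:C : C) @ \oo --> ((sin h)%:C : C).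
  by apply: cvgC; rewrite sin.unlock; exact: is_cvg_series_sin_coeff.
have h3 : (fun N => 'i * (series (sin_coeff h) N)%:C : C) @ \oo --> ('i * (sin h)%:C : C).
  exact: cvgMl_tmp.
exact: (cvgB h1 h3).
Qed.


Definition inA (i : nat) := (i == 0%N) || (i == 3%N).
Definition inB (i : nat) := (i == 1%N) || (i == 2%N).
Definition eF (m i j : nat) : C :=
  let hf := ((2%:R : R)^-1)%:C in
  match m with
  | 0%N => if inA i && inA j then hf else 0
  | 1%N => if inA i && inA j then (if i == j then hf else - hf) else 0
  | 2%N => if inB i && inB j then hf else 0
  | _ => if inB i && inB j then (if i == j then hf else - hf) else 0
  end.
Definition EM (m : nat) : 'M[C]_(2 * 2) := mF (eF m).

Variables a1 a2 a3 : R.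
Definition qq := a1 - a2.
Definition rr := a1 + a2.
Definition hh (m : nat) : R :=
  match m with
  | 0%N => a3 + qq
  | 1%N => a3 - qq
  | 2%N => - a3 + rr
  | _ => - a3 - rr
  end.
Definition lam (m : nat) : C := - 'i * (hh m)%:C.
Definition Xm : 'M[C]_(2 * 2) :=
  - 'i *: (a1%:C *: (sigma1 R *t sigma1 R)
         + a2%:C *: (sigma2 R *t sigma2 R)
         + a3%:C *: (sigma3 R *t sigma3 R)).



Definition s1F (a b : nat) : C := if a == b then 0 else 1.
Definition s2F (a b : nat) : C := if a == b then 0 else if a == 0%N then - 'i else 'i.
Definition s3F (a b : nat) : C := if a == b then (if a == 0%N then 1 else -1) else 0.
Definition xF (i j : nat) : C :=
  - 'i * (a1%:C * (s1F (i %/ 2) (j %/ 2) * s1F (i %% 2) (j %% 2))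
        + a2%:C * (s2F (i %/ 2) (j %/ 2) * s2F (i %% 2) (j %% 2))
        + a3%:C * (s3F (i %/ 2) (j %/ 2) * s3F (i %% 2) (j %% 2))).
Lemma XmF : Xm = mF xF.
Proof. Time by apply/matrixP => i j; rewrite !mxE. Qed.


Lemma XE m : (m < 4)%N -> Xm *m EM m = lam m *: EM m.
Proof.
move=> hm; rewrite XmF /EM mulF scaleF; apply: mF_eq => i j hi hj.
case: i hi => [|[|[|[|i]]]] // _; case: j hj => [|[|[|[|j]]]] // _;
case: m hm => [|[|[|[|m]]]] // _.
all: rewrite /xF /s1F /s2F /s3F /eF /inA /inB /lam /hh /qq /rr /=.
all: cplx.
all: by field.
Qed.


Lemma sumEM : \sum_(m < 4) EM m = 1%:M.
Proof.
rewrite !big_ord_recr big_ord0 /= add0r /EM !addF oneF; apply: mF_eq => i j hi hj.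
case: i hi => [|[|[|[|i]]]] // _; case: j hj => [|[|[|[|j]]]] // _.
all: rewrite /eF /inA /inB /=.
all: cplx.
all: by field.
Qed.

Lemma powX k : mxpow Xm k = \sum_(m < 4) lam m ^+ k *: EM m.
Proof.
elim: k => [|k ih]; first by rewrite /mxpow /= -sumEM; apply: eq_bigr => m _; rewrite expr0 scale1r.
rewrite /mxpow /= -/(mxpow Xm k) ih mulmx_sumr; apply: eq_bigr => m _.
by rewrite -scalemxAr XE // scalerA exprSr.
Qed.

Lemma partialE N : \sum_(k < N) (k`!%:R : C)^-1 *: mxpow Xm k
  = \sum_(m < 4) (\sum_(k < N) (k`!%:R : C)^-1 * (- 'i * (hh m)%:C) ^+ k) *: EM m.
Proof.
under eq_bigr do rewrite powX scaler_sumr.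
rewrite exchange_big /=; apply: eq_bigr => m _.
rewrite scaler_suml; apply: eq_bigr => k _.
by rewrite scalerA.
Qed.

Definition ee (m : nat) : C := (cos (hh m))%:C - 'i * (sin (hh m))%:C.

Lemma expX : mexp Xm = \sum_(m < 4) ee m *: EM m.
Proof.
rewrite /mexp; apply: cvg_lim => //.
under eq_fun do rewrite partialE !big_ord_recr big_ord0 /= add0r.
rewrite !big_ord_recr big_ord0 /= add0r.
apply: cvgD; [apply: cvgD; [apply: cvgD|]|]; apply: cvgZr_tmp; exact: expi_cvg.
Qed.


Lemma OmegaF : mexp Xm = mF (omG (cos a3) (sin a3) (cos qq) (sin qq) (cos rr) (sin rr)).
Proof.
rewrite expX !big_ord_recr big_ord0 /= add0r /EM !scaleF !addF; apply: mF_eq => i j hi hj.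
case: i hi => [|[|[|[|i]]]] // _; case: j hj => [|[|[|[|j]]]] // _.
all: rewrite /ee /hh /omG /eF /inA /inB /=.
all: move: (qq) (rr) => q r.
all: rewrite ?cosD ?sinD ?cosB ?sinB ?cosN ?sinN.
all: cplx.
all: by field.
Qed.
End Exp.

End Aux.
Import Aux.

Theorem theorem2 (R : realType) (a1 a2 a3 : R) (rho : 'M[R[i]]_(2 * 2)) :
  is_density rho ->
  (forall i j : 'I_3, i != j -> corr rho i j = 0) ->
  let Omega : 'M[R[i]]_(2 * 2) :=
    mexp (- 'i *: (a1%:C *: (sigma1 R *t sigma1 R)
                 + a2%:C *: (sigma2 R *t sigma2 R)
                 + a3%:C *: (sigma3 R *t sigma3 R))) in
  exists zeta : 'M[R[i]]_2,
    is_density zeta /\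
    ptraceE (Omega *m rho *m dagger Omega)
    = ptraceE (Omega *m (ptraceE rho *t zeta) *m dagger Omega).
Proof.
move=> [hH hPSD hT] hC Omega.
have Om : Omega = mF (omG (cos a3) (sin a3) (cos (qq a1 a2)) (sin (qq a1 a2)) (cos (rr a1 a2)) (sin (rr a1 a2))).
  exact: OmegaF.
have rE := rho_struct hH hC hT.
move: rE; set X := fun i j => _; set Y := fun i j => _ => rE.
rewrite rE in hPSD.
have hb := bloch_le1 hPSD.
set Cp := cos a3; set Sp := sin a3; set cq := cos (qq a1 a2); set sq := sin (qq a1 a2).
set cr := cos (rr a1 a2); set sr := sin (rr a1 a2).
have [z1 [z2 [z3 [hF1 hF2 hF3 hz]]]] :=
  zsol (s1 cq sq cr sr) (c1 cq sq cr sr) (s2 cq sq cr sr) (c2 cq sq cr sr) (s3 Cp Sp) (c3 Cp Sp)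
       (aa1 (X 0 2)%N) (aa2 (Y 0 2)%N) (aa3 (X 0 0)%N (X 1 1)%N (X 2 2)%N)
       (bb1 (X 0 1)%N) (bb2 (Y 0 1)%N) (bb3 (X 0 0)%N (X 1 1)%N (X 2 2)%N).
exists (mF2 (zetaF z1 z2 z3)); split.
  apply: zeta_density; exact: (le_trans hz hb).
rewrite Om rE; apply: core.
- by rewrite /Cp /Sp cos2Dsin2 subrr.
- by rewrite /cq /sq cos2Dsin2 subrr.
- by rewrite /cr /sr cos2Dsin2 subrr.
- exact: hF1.
- exact: hF2.
- exact: hF3.
Qed.
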